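(* Let $m\ge1$, $r\ge0$ be integers and $S_m(r)=S_m(r,r)$. Then $$\mathrm{vol}(S_m^{\rm cube}(r))=\sum_{j=0}^{\min\{m,r\}}\binom mj\binom rj\binom{r+m-j}{m-j},\qquad \mathrm{vol}(S_m^{\rm conv}(r))=\frac{r^m}{m!}\binom{2m}{m},$$ and for every fixed $m\ge1$, $\lim_{r\to\infty}\mathrm{vol}(S^{\rm conv}_m(r))/\mathrm{vol}(S^{\rm cube}_m(r))=1$.
   Context: $S_m(r^+,r^-)=\{\mathbf x\in\mathbb Z^m:\sum_{i:x_i>0}x_i\le r^+,\ \sum_{i:x_i<0}|x_i|\le r^-\}$; $S_m(r,r)$ is the ball of radius $r$ around $\mathbf 0$ in $(\mathbb Z^m,d_a)$, where $d_a(\mathbf x,\mathbf y)=\max\{\sum_{i:x_i>y_i}(x_i-y_i),\sum_{i:x_i<y_i}(y_i-x_i)\}$. For $S\subset\mathbb Z^m$, $S^{\rm cube}=\bigcup_{\mathbf y\in S}(\mathbf y+[-1/2,1/2]^m)\subset\mathbb R^m$ and $S^{\rm conv}$ is the convex hull of $S$ in $\mathbb R^m$; vol is Lebesgue measure. *)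

(* Defs.v *)
From Stdlib Require Import Reals Lra Lia ZArith List.
Import ListNotations.
Open Scope R_scope.

(* Points of R^m : functions nat -> R, only coordinates i < m matter.
   Points of Z^m : lists of integers of length m. *)

Definition Sm (m rp rn : nat) (p : list Z) : Prop :=
  length p = m /\
  (fold_right (fun x acc => Z.max x 0 + acc) 0 p <= Z.of_nat rp)%Z /\
  (fold_right (fun x acc => Z.max (- x) 0 + acc) 0 p <= Z.of_nat rn)%Z.

Definition cubeset (m : nat) (S : list Z -> Prop) (y : nat -> R) : Prop :=
  exists p, S p /\ forall i, (i < m)%nat ->
    IZR (nth i p 0%Z) - 1/2 <= y i <= IZR (nth i p 0%Z) + 1/2.

Definition convset (m : nat) (S : list Z -> Prop) (y : nat -> R) : Prop :=
  exists l : list (R * list Z),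
    (forall c, In c l -> 0 <= fst c /\ S (snd c)) /\
    fold_right (fun c a => fst c + a) 0 l = 1 /\
    forall i, (i < m)%nat ->
      y i = fold_right (fun c a => fst c * IZR (nth i (snd c) 0%Z) + a) 0 l.

Definition gcube (m N : nat) (k : list Z) (y : nat -> R) : Prop :=
  forall i, (i < m)%nat ->
    IZR (nth i k 0%Z) / INR N <= y i <= (IZR (nth i k 0%Z) + 1) / INR N.

Definition count_is (m : nat) (P : list Z -> Prop) (c : nat) : Prop :=
  exists l : list (list Z), NoDup l /\ length l = c /\
    forall k, In k l <-> (length k = m /\ P k).

(* A (subset of R^m) is Jordan measurable with content v: inner and outer
   grid approximations at mesh 1/N both converge to v. *)
Definition is_volume (m : nat) (A : (nat -> R) -> Prop) (v : R) : Prop :=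
  forall eps, 0 < eps -> exists N0 : nat, forall N : nat,
    (N0 <= N)%nat -> (1 <= N)%nat ->
    exists ci co,
      count_is m (fun k => forall y, gcube m N k y -> A y) ci /\
      count_is m (fun k => exists y, gcube m N k y /\ A y) co /\
      Rabs (INR ci / INR N ^ m - v) < eps /\
      Rabs (INR co / INR N ^ m - v) < eps.

(* Main.v *)
Require Import Defs.
From Stdlib Require Import Reals Lra Lia ZArith List Classical ClassicalEpsilon.
Import ListNotations.

Open Scope nat_scope.

Fixpoint ssum (n : nat) (f : nat -> nat) : nat :=
  match n with 0 => 0 | S n' => ssum n' f + f n' end.

Lemma ssum_S n f : ssum (S n) f = ssum n f + f n. Proof. reflexivity. Qed.

Lemma ssum_ext n f g : (forall i, i < n -> f i = g i) -> ssum n f = ssum n g.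
Proof. induction n; simpl; intros H; auto. rewrite IHn by (intros; apply H; lia). rewrite H by lia; auto. Qed.

Lemma ssum_add n f g : ssum n (fun i => f i + g i) = ssum n f + ssum n g.
Proof. induction n; simpl; lia. Qed.

Lemma ssum_mul_l n c f : ssum n (fun i => c * f i) = c * ssum n f.
Proof. induction n; simpl; [lia|]. rewrite IHn. lia. Qed.

Lemma ssum_succ_l n f : ssum (S n) f = f 0 + ssum n (fun i => f (S i)).
Proof. induction n; simpl in *; [lia|]. rewrite IHn. lia. Qed.

Lemma ssum_exchange n k (f : nat -> nat -> nat) :
  ssum n (fun i => ssum k (fun j => f i j)) = ssum k (fun j => ssum n (fun i => f i j)).
Proof. induction n; simpl. - induction k; simpl; lia.
  - rewrite IHn. rewrite <- ssum_add. reflexivity. Qed.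

Lemma ssum_zero_tail n k f : n <= k -> (forall i, n <= i -> f i = 0) -> ssum k f = ssum n f.
Proof. intros H Hf. induction H; simpl; auto. rewrite Hf by lia. lia. Qed.

Fixpoint bin (n k : nat) : nat :=
  match n, k with
  | _, 0 => 1
  | 0, S _ => 0
  | S n', S k' => bin n' k' + bin n' (S k')
  end.

Lemma bin_0 n : bin n 0 = 1. Proof. destruct n; auto. Qed.
Lemma bin_SS n k : bin (S n) (S k) = bin n k + bin n (S k). Proof. reflexivity. Qed.
Lemma bin_gt n k : n < k -> bin n k = 0.
Proof. revert k; induction n; intros [|k] H; simpl; try lia; auto.
  rewrite !IHn by lia. auto. Qed.
Lemma bin_nn n : bin n n = 1.
Proof. induction n; simpl; auto. rewrite IHn, bin_gt by lia. auto. Qed.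

Lemma hockey1 a j : ssum a (fun x => bin (a - S x) j) = bin a (S j).
Proof. induction a. - reflexivity.
  - rewrite ssum_succ_l.
    replace (ssum a (fun i => bin (S a - S (S i)) j)) with (ssum a (fun x => bin (a - S x) j)).
    2:{ apply ssum_ext; intros; f_equal; lia. }
    rewrite IHa. replace (S a - 1) with a by lia. simpl. lia.
Qed.

Lemma hockey2 b n : ssum (S b) (fun y => bin (b - y + n) n) = bin (b + n + 1) (n + 1).
Proof. induction b.
  - simpl. rewrite bin_nn. replace (n+1) with (S n) by lia. rewrite bin_nn. reflexivity.
  - rewrite ssum_succ_l.
    replace (ssum (S b) (fun i => bin (S b - S i + n) n)) with (ssum (S b) (fun y => bin (b - y + n) n)).
    2:{ apply ssum_ext; intros; f_equal; lia. }
    rewrite IHb. replace (S b + n + 1) with (S (b + n + 1)) by lia.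
    replace (n+1) with (S n) by lia. rewrite bin_SS. replace (S b - 0 + n) with (b + n + 1) by lia.
    lia.
Qed.

Lemma vandermonde p q k : ssum (S k) (fun j => bin p j * bin q (k - j)) = bin (p + q) k.
Proof. revert k; induction p; intros k.
  - rewrite ssum_succ_l. rewrite (ssum_ext _ _ (fun _ => 0)) by (intros; simpl; lia).
    assert (forall n, ssum n (fun _ => 0) = 0) as Z0 by (induction n; simpl; lia).
    rewrite Z0. simpl. replace (k-0) with k by lia. lia.
  - destruct k.
    + simpl. rewrite !bin_0. reflexivity.
    + rewrite ssum_succ_l. simpl (bin (S p) 0).
      rewrite (ssum_ext _ _ (fun j => bin p j * bin q (k - j) + bin p (S j) * bin q (S k - S j))).
      2:{ intros i Hi. rewrite bin_SS. replace (S k - S i) with (k - i) by lia. lia. }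
      rewrite ssum_add. rewrite IHp.
      pose proof (IHp (S k)) as H2. rewrite ssum_succ_l in H2. simpl (bin p 0) in H2.
      replace (S p + q) with (S (p + q)) by lia. rewrite bin_SS. rewrite bin_0 in H2. lia.
Qed.

Definition G (m a b : nat) : nat := ssum (S m) (fun j => bin m j * bin a j * bin (b + m - j) (m - j)).

Lemma G_rec m a b : G (S m) a b = ssum (S b) (fun y => G m a (b - y)) + ssum a (fun x => G m (a - S x) b).
Proof.
  unfold G.
  rewrite (ssum_exchange (S b) (S m)).
  rewrite (ssum_exchange a (S m)).
  rewrite (ssum_ext (S m) (fun j => ssum (S b) (fun i => bin m j * bin a j * bin (b - i + m - j) (m - j)))
     (fun j => bin m j * bin a j * bin (b + (m - j) + 1) ((m - j) + 1))).
  2:{ intros j Hj. rewrite <- hockey2. rewrite <- ssum_mul_l. apply ssum_ext. intros; f_equal. f_equal. lia. }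
  rewrite (ssum_ext (S m) (fun j => ssum a (fun i => bin m j * bin (a - S i) j * bin (b + m - j) (m - j)))
     (fun j => bin m j * bin a (S j) * bin (b + m - j) (m - j))).
  2:{ intros j Hj. rewrite <- hockey1.
      rewrite (ssum_ext _ _ (fun i => (bin m j * bin (b + m - j) (m - j)) * bin (a - S i) j)) by (intros; lia).
      rewrite ssum_mul_l. lia. }
  rewrite (ssum_ext (S (S m)) _ (fun j => bin m j * bin a j * bin (b + S m - j) (S m - j)
                 + (match j with 0 => 0 | S j' => bin m j' * bin a j * bin (b + S m - j) (S m - j) end))).
  2:{ intros [|j] Hj. - rewrite !bin_0. lia. - rewrite bin_SS. lia. }
  rewrite ssum_add. f_equal.
  - rewrite ssum_S. rewrite (bin_gt m (S m)) by lia. rewrite !Nat.mul_0_l, Nat.add_0_r.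
    apply ssum_ext. intros j Hj. do 2 f_equal; lia.
  - rewrite ssum_succ_l. rewrite Nat.add_0_l. apply ssum_ext. intros j Hj. do 2 f_equal; lia.
Qed.

Local Open Scope nat_scope.

Definition posZ (p : list Z) : Z := fold_right (fun x acc => Z.max x 0 + acc)%Z 0%Z p.
Definition negZ (p : list Z) : Z := fold_right (fun x acc => Z.max (- x) 0 + acc)%Z 0%Z p.

Lemma posZ_nn p : (0 <= posZ p)%Z. Proof. induction p; simpl; lia. Qed.
Lemma negZ_nn p : (0 <= negZ p)%Z. Proof. induction p; simpl; lia. Qed.

Definition zr (b a : nat) : list Z :=
  map (fun y => - Z.of_nat y)%Z (seq 0 (S b)) ++ map (fun x => Z.of_nat (S x)) (seq 0 a).

Lemma in_zr b a x : In x (zr b a) <-> (- Z.of_nat b <= x <= Z.of_nat a)%Z.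
Proof. unfold zr. rewrite in_app_iff, !in_map_iff. split.
  - intros [[y [<- Hy]]|[y [<- Hy]]]; apply in_seq in Hy; lia.
  - intros H. destruct (Z_le_gt_dec x 0).
    + left. exists (Z.to_nat (- x)). rewrite in_seq. lia.
    + right. exists (Z.to_nat x - 1). rewrite in_seq. lia.
Qed.

Lemma NoDup_map_inj {A B} (f : A -> B) l : (forall x y, f x = f y -> x = y) -> NoDup l -> NoDup (map f l).
Proof. intros Hf H; induction H; simpl; constructor; auto.
  rewrite in_map_iff. intros [y [E Hy]]. apply Hf in E. subst. auto. Qed.

Lemma NoDup_zr b a : NoDup (zr b a).
Proof. unfold zr. apply NoDup_app.
  - apply NoDup_map_inj; [intros; lia| apply seq_NoDup].
  - apply NoDup_map_inj; [intros; lia| apply seq_NoDup].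
  - intros x H1 H2. rewrite in_map_iff in *. destruct H1 as [y [<- _]]. destruct H2 as [z [E _]]. lia.
Qed.

Lemma NoDup_flat_map_cons (xs : list Z) (L : Z -> list (list Z)) :
  NoDup xs -> (forall x, NoDup (L x)) -> NoDup (flat_map (fun x => map (cons x) (L x)) xs).
Proof. intros H HL; induction H; simpl. constructor.
  apply NoDup_app; auto.
  - apply NoDup_map_inj; auto. intros u v E; inversion E; auto.
  - intros p Hp Hp2. rewrite in_map_iff in Hp. destruct Hp as [q [<- _]].
    rewrite in_flat_map in Hp2. destruct Hp2 as [y [Hy Hq]]. rewrite in_map_iff in Hq.
    destruct Hq as [q' [E _]]. inversion E; subst. auto.
Qed.

Fixpoint Sl (m a b : nat) : list (list Z) :=
  match m with
  | 0 => [[]]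
  | S m' => flat_map (fun x => map (cons x)
              (Sl m' (a - Z.to_nat (Z.max x 0)) (b - Z.to_nat (Z.max (- x) 0)))) (zr b a)
  end.

Lemma Sl_NoDup m a b : NoDup (Sl m a b).
Proof. revert a b; induction m; intros; cbn [Sl].
  - constructor; auto. constructor.
  - apply NoDup_flat_map_cons; auto. apply NoDup_zr. Qed.

Lemma Sl_In m a b p : In p (Sl m a b) <-> Sm m a b p.
Proof. unfold Sm. revert a b p; induction m; intros a b p; cbn [Sl].
  - split. + intros [<-|[]]. simpl; lia.
    + intros [H _]. destruct p; simpl in *; auto; lia.
  - rewrite in_flat_map. split.
    + intros [x [Hx Hp]]. rewrite in_map_iff in Hp. destruct Hp as [q [<- Hq]].
      apply IHm in Hq. apply in_zr in Hx. simpl. lia.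
    + intros [Hl [H1 H2]]. destruct p as [|x q]; simpl in Hl; [lia|]. simpl in H1, H2.
      exists x. split. apply in_zr. pose proof (posZ_nn q); pose proof (negZ_nn q); unfold posZ, negZ in *; lia.
      apply in_map. apply IHm. pose proof (posZ_nn q); pose proof (negZ_nn q); unfold posZ, negZ in *; lia.
Qed.

Lemma length_flat_map_cons (xs : list Z) (L : Z -> list (list Z)) :
  length (flat_map (fun x => map (cons x) (L x)) xs) = list_sum (map (fun x => length (L x)) xs).
Proof. induction xs; simpl; auto. rewrite length_app, length_map, IHxs. auto. Qed.

Lemma list_sum_seq (g : nat -> nat) n : list_sum (map g (seq 0 n)) = ssum n g.
Proof. induction n; auto. rewrite seq_S, map_app, list_sum_app, IHn. simpl. lia. Qed.

Lemma Sl_length m a b : length (Sl m a b) = G m a b.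
Proof. revert a b; induction m; intros a b.
  - unfold G. simpl. rewrite !bin_0. reflexivity.
  - rewrite G_rec. cbn [Sl]. rewrite length_flat_map_cons. unfold zr. rewrite map_app, list_sum_app, !map_map.
    rewrite (map_ext _ (fun y => G m a (b - y))).
    2:{ intros y. rewrite IHm. f_equal; lia. }
    rewrite (map_ext (fun x => length (Sl m (a - Z.to_nat (Z.max (Z.of_nat (S x)) 0)) (b - Z.to_nat (Z.max (- Z.of_nat (S x)) 0))))
                     (fun x => G m (a - S x) b)).
    2:{ intros y. rewrite IHm. f_equal; lia. }
    rewrite !list_sum_seq. reflexivity.
Qed.

Open Scope R_scope.

Lemma Rabs_inv x b : Rabs x <= b -> - b <= x <= b.
Proof. intros H. pose proof (Rle_abs x). pose proof (Rle_abs (- x)). rewrite Rabs_Ropp in *. lra. Qed.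

Lemma Un_cv_K (x : nat -> R) l K N1 :
  (forall N, (N1 <= N)%nat -> (1 <= N)%nat -> Rabs (x N - l) <= K / INR N) -> Un_cv x l.
Proof.
  intros H eps Heps.
  destruct (archimed (Rabs K / eps)) as [H1 _].
  assert (0 <= IZR (up (Rabs K / eps))) as H0.
  { apply Rlt_le, Rle_lt_trans with (Rabs K / eps); auto. apply Rmult_le_pos; [apply Rabs_pos| left; apply Rinv_0_lt_compat; auto]. }
  exists (Nat.max N1 (S (Z.to_nat (up (Rabs K / eps))))).
  intros n Hn. unfold Rdist. 
  assert (Hn1 : (1 <= n)%nat) by lia.
  assert (HnR : 0 < INR n) by (apply lt_0_INR; lia).
  eapply Rle_lt_trans. apply H; lia.
  assert (IZR (up (Rabs K / eps)) < INR n).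
  { rewrite INR_IZR_INZ. apply IZR_lt. apply le_IZR in H0. lia. }
  apply Rle_lt_trans with (Rabs K / INR n).
  { unfold Rdiv. apply Rmult_le_compat_r. left; apply Rinv_0_lt_compat; auto. apply RRle_abs. }
  apply Rmult_lt_reg_r with (INR n); auto. unfold Rdiv. rewrite Rmult_assoc, Rinv_l by lra.
  apply Rmult_lt_reg_r with (/ eps). apply Rinv_0_lt_compat; auto.
  rewrite Rmult_1_r, (Rmult_comm eps), Rmult_assoc, Rinv_r by lra. lra.
Qed.

Lemma Un_cv_ev (x y : nat -> R) l N1 : (forall N, (N1 <= N)%nat -> x N = y N) -> Un_cv x l -> Un_cv y l.
Proof. intros E H eps He. destruct (H eps He) as [N0 HN]. exists (Nat.max N0 N1). intros n Hn.
  rewrite <- E by lia. apply HN; lia. Qed.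

Lemma Un_cv_const c : Un_cv (fun _ => c) c.
Proof. intros eps He. exists 0%nat. intros. unfold Rdist. rewrite Rminus_diag, Rabs_R0. auto. Qed.

Lemma CV_pow (A : nat -> R) l k : Un_cv A l -> Un_cv (fun n => A n ^ k) (l ^ k).
Proof. intros H; induction k; simpl. apply Un_cv_const. apply CV_mult; auto. Qed.

Fixpoint rsum (n : nat) (f : nat -> R) : R := match n with 0 => 0 | S n' => rsum n' f + f n' end.
Fixpoint rprod (n : nat) (f : nat -> R) : R := match n with 0 => 1 | S n' => rprod n' f * f n' end.

Lemma rsum_ext n f g : (forall i, (i < n)%nat -> f i = g i) -> rsum n f = rsum n g.
Proof. induction n; simpl; intros H; auto. rewrite IHn by (intros; apply H; lia). rewrite H by lia; auto. Qed.
Lemma rprod_ext n f g : (forall i, (i < n)%nat -> f i = g i) -> rprod n f = rprod n g.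
Proof. induction n; simpl; intros H; auto. rewrite IHn by (intros; apply H; lia). rewrite H by lia; auto. Qed.

Lemma CV_rsum n (F : nat -> nat -> R) (l : nat -> R) :
  (forall j, (j < n)%nat -> Un_cv (fun N => F N j) (l j)) -> Un_cv (fun N => rsum n (F N)) (rsum n l).
Proof. induction n; simpl; intros H. apply Un_cv_const. apply CV_plus; auto. Qed.

Lemma CV_rprod n (F : nat -> nat -> R) (l : nat -> R) :
  (forall j, (j < n)%nat -> Un_cv (fun N => F N j) (l j)) -> Un_cv (fun N => rprod n (F N)) (rprod n l).
Proof. induction n; simpl; intros H. apply Un_cv_const. apply CV_mult; auto. Qed.

Lemma INR_ssum n f : INR (ssum n f) = rsum n (fun i => INR (f i)).
Proof. induction n; simpl; auto. rewrite plus_INR, IHn. auto. Qed.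

Lemma rsum_div n f c : rsum n f / c = rsum n (fun i => f i / c).
Proof. induction n; simpl. unfold Rdiv; ring. rewrite <- IHn. unfold Rdiv; ring. Qed.

Lemma rsum_mul_l n f c : c * rsum n f = rsum n (fun i => c * f i).
Proof. induction n; simpl. ring. rewrite <- IHn. ring. Qed.

Lemma rprod_div n f c : c <> 0 -> rprod n f / c ^ n = rprod n (fun i => f i / c).
Proof. intros Hc. induction n; simpl. field. rewrite <- IHn. field. split; auto. apply pow_nonzero; auto. Qed.

Lemma rprod_zero n f i : (i < n)%nat -> f i = 0 -> rprod n f = 0.
Proof. induction n; intros H E; simpl. lia. destruct (Nat.eq_dec i n). subst. rewrite E; ring.
  rewrite IHn by (auto; lia). ring. Qed.

Lemma C_n0 n : C n 0 = 1. Proof. unfold C. simpl. rewrite Nat.sub_0_r. field. apply INR_fact_neq_0. Qed.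
Lemma C_nn n : C n n = 1. Proof. unfold C. rewrite Nat.sub_diag. simpl. field. apply INR_fact_neq_0. Qed.

Lemma bin_C n k : (k <= n)%nat -> INR (bin n k) = C n k.
Proof. revert k; induction n; intros k Hk.
  - replace k with 0%nat by lia. simpl. rewrite C_n0. auto.
  - destruct k. rewrite bin_0, C_n0. auto.
    rewrite bin_SS, plus_INR. destruct (Nat.eq_dec k n).
    + subst. rewrite bin_nn, (bin_gt n (S n)) by lia. rewrite C_nn. simpl. ring.
    + rewrite !IHn by lia. apply pascal. lia.
Qed.

Lemma fact_ratio a j : (j <= a)%nat -> INR (fact a) / INR (fact (a - j)) = rprod j (fun i => INR a - INR i).
Proof. induction j; intros H; simpl. rewrite Nat.sub_0_r. field. apply INR_fact_neq_0.
  rewrite <- IHj by lia. replace (a - j)%nat with (S (a - S j)) by lia. rewrite fact_simpl.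
  rewrite mult_INR. replace (INR a - INR j) with (INR (S (a - S j))).
  2:{ rewrite <- minus_INR by lia. f_equal. lia. }
  field. split. apply INR_fact_neq_0. apply not_0_INR. lia. Qed.

Lemma bin_fall a j : INR (bin a j) * INR (fact j) = rprod j (fun i => INR a - INR i).
Proof. destruct (le_lt_dec j a).
  - rewrite bin_C by auto. unfold C. rewrite <- fact_ratio by auto. field. split; apply INR_fact_neq_0.
  - rewrite bin_gt by auto. rewrite (rprod_zero _ _ a); auto. simpl; ring. ring.
Qed.

Lemma CV_lin (a : nat -> nat) r c i :
  (forall N, Rabs (INR (a N) - r * INR N) <= c) -> Un_cv (fun N => (INR (a N) - INR i) / INR N) r.
Proof. intros H. apply Un_cv_K with (K := c + INR i) (N1 := 0%nat). intros N _ HN.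
  assert (0 < INR N) by (apply lt_0_INR; lia).
  replace ((INR (a N) - INR i) / INR N - r) with ((INR (a N) - r * INR N - INR i) / INR N) by (field; lra).
  unfold Rdiv. rewrite Rabs_mult, Rabs_right with (r := / INR N) by (left; apply Rinv_0_lt_compat; auto).
  apply Rmult_le_compat_r. left; apply Rinv_0_lt_compat; auto.
  specialize (H N). apply Rabs_inv in H. pose proof (pos_INR i). apply Rabs_le. lra.
Qed.

Lemma CV_bin (a : nat -> nat) r c j :
  (forall N, Rabs (INR (a N) - r * INR N) <= c) ->
  Un_cv (fun N => INR (bin (a N) j) / INR N ^ j) (r ^ j / INR (fact j)).
Proof. intros H.
  apply Un_cv_ev with (x := fun N => rprod j (fun i => (INR (a N) - INR i) / INR N) / INR (fact j)) (N1 := 1%nat).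
  { intros N HN. assert (INR N <> 0) by (apply not_0_INR; lia).
    rewrite <- rprod_div by auto. rewrite <- bin_fall. field. split. apply pow_nonzero; auto. apply INR_fact_neq_0. }
  unfold Rdiv at 2. apply CV_mult. 2: apply Un_cv_const.
  replace (r ^ j) with (rprod j (fun _ => r)). 2:{ clear; induction j; simpl; auto. rewrite IHj; ring. }
  apply CV_rprod. intros. apply CV_lin with c; auto.
Qed.

Open Scope R_scope.

Lemma bin_fact m j : (j <= m)%nat -> INR (bin m j) * INR (fact j) * INR (fact (m - j)) = INR (fact m).
Proof. intros H. rewrite bin_C by auto. unfold C. field. split; apply INR_fact_neq_0. Qed.

Lemma bin_sym m j : (j <= m)%nat -> bin m (m - j) = bin m j.
Proof. intros H. apply INR_eq. rewrite !bin_C by lia. symmetry. apply pascal_step1. auto. Qed.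

Lemma limit_value m r :
  rsum (S m) (fun j => INR (bin m j) * (r ^ j / INR (fact j)) * (r ^ (m - j) / INR (fact (m - j))))
  = r ^ m / INR (fact m) * C (2 * m) m.
Proof.
  rewrite (rsum_ext _ _ (fun j => r ^ m / INR (fact m) * INR (bin m j * bin m (m - j)))).
  2:{ intros j Hj. assert (INR (bin m j) <> 0).
      { intro E. pose proof (bin_fact m j ltac:(lia)) as F. pose proof (INR_fact_neq_0 m). rewrite E in F. lra. }
      rewrite bin_sym by lia. rewrite mult_INR. rewrite <- (bin_fact m j) by lia.
      replace (r ^ m) with (r ^ j * r ^ (m - j)) by (rewrite <- pow_add; f_equal; lia).
      field. repeat split; auto; apply INR_fact_neq_0. }
  rewrite <- rsum_mul_l. f_equal. rewrite <- INR_ssum. rewrite vandermonde.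
  rewrite bin_C by lia. f_equal; lia.
Qed.

Lemma CV_G m (a b : nat -> nat) r c :
  (forall N, Rabs (INR (a N) - r * INR N) <= c) ->
  (forall N, Rabs (INR (b N) - r * INR N) <= c) ->
  Un_cv (fun N => INR (G m (a N) (b N)) / INR N ^ m) (r ^ m / INR (fact m) * C (2 * m) m).
Proof.
  intros Ha Hb. rewrite <- limit_value.
  apply Un_cv_ev with (N1 := 1%nat) (x := fun N => rsum (S m) (fun j => INR (bin m j) *
     (INR (bin (a N) j) / INR N ^ j) * (INR (bin (b N + m - j) (m - j)) / INR N ^ (m - j)))).
  { intros N HN. assert (INR N <> 0) by (apply not_0_INR; lia).
    unfold G. rewrite INR_ssum, rsum_div. apply rsum_ext. intros j Hj.
    rewrite !mult_INR. replace (INR N ^ m) with (INR N ^ j * INR N ^ (m - j)) by (rewrite <- pow_add; f_equal; lia).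
    field. split; apply pow_nonzero; auto. }
  apply CV_rsum. intros j Hj. apply CV_mult. apply CV_mult. apply Un_cv_const.
  apply CV_bin with c; auto.
  apply CV_bin with (c + INR m). intros N. specialize (Hb N). apply Rabs_inv in Hb.
  replace (b N + m - j)%nat with (b N + (m - j))%nat by lia. rewrite plus_INR.
  assert (INR (m - j) <= INR m) by (apply le_INR; lia). pose proof (pos_INR (m - j)).
  apply Rabs_le. lra.
Qed.

Open Scope R_scope.

Lemma count_exists m (P : list Z -> Prop) (L : list (list Z)) :
  (forall k, length k = m -> P k -> In k L) -> exists c, count_is m P c /\ (c <= length L)%nat.
Proof.
  intros H.
  set (f := fun k : list Z => if excluded_middle_informative (length k = m /\ P k) then true else false).
  set (l := nodup (list_eq_dec Z.eq_dec) (filter f L)).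
  exists (length l). split.
  - exists l. split. apply NoDup_nodup. split; auto. intros k. unfold l. rewrite nodup_In, filter_In.
    unfold f. destruct (excluded_middle_informative (length k = m /\ P k)) as [Hk|Hk]; split; intros; auto.
    + split; auto. destruct Hk; auto.
    + destruct H0; discriminate.
    + contradiction.
  - apply NoDup_incl_length. apply NoDup_nodup. intros x. unfold l. rewrite nodup_In, filter_In. tauto.
Qed.

Lemma count_lower m P c L : count_is m P c -> NoDup L -> (forall k, In k L -> length k = m /\ P k) -> (length L <= c)%nat.
Proof. intros [l [Hn [Hl Hi]]] HL H. subst c. apply NoDup_incl_length; auto. intros k Hk. apply Hi. auto. Qed.

Lemma count_upper m (P : list Z -> Prop) c L : count_is m P c -> (forall k, length k = m -> P k -> In k L) -> (c <= length L)%nat.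
Proof. intros [l [Hn [Hl Hi]]] H. subst c. apply NoDup_incl_length; auto. intros k Hk. apply Hi in Hk. apply H; tauto. Qed.

Lemma count_unique m P c c' : count_is m P c -> count_is m P c' -> c = c'.
Proof. intros H1 H2. pose proof H1 as [l [Hn [Hl Hi]]]. pose proof H2 as [l' [Hn' [Hl' Hi']]].
  assert (c <= c')%nat. { rewrite <- Hl. apply (count_lower m P c' l); auto. intros; apply Hi; auto. }
  assert (c' <= c)%nat. { rewrite <- Hl'. apply (count_lower m P c l'); auto. intros; apply Hi'; auto. }
  lia. Qed.

Lemma gcube_nonempty m N k : (1 <= N)%nat -> gcube m N k (fun i => IZR (nth i k 0%Z) / INR N).
Proof. intros HN i Hi. assert (0 < INR N) by (apply lt_0_INR; lia). split. lra.
  unfold Rdiv. apply Rmult_le_compat_r. left; apply Rinv_0_lt_compat; auto. lra. Qed.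

Lemma squeeze_ratio (L x U N : nat) m v eps : (1 <= N)%nat -> (L <= x <= U)%nat ->
  Rabs (INR L / INR N ^ m - v) < eps -> Rabs (INR U / INR N ^ m - v) < eps -> Rabs (INR x / INR N ^ m - v) < eps.
Proof. intros HN Hx H1 H2. assert (0 < INR N ^ m) by (apply pow_lt, lt_0_INR; lia).
  assert (INR L / INR N ^ m <= INR x / INR N ^ m /\ INR x / INR N ^ m <= INR U / INR N ^ m).
  { split; unfold Rdiv; apply Rmult_le_compat_r; try (left; apply Rinv_0_lt_compat; auto); apply le_INR; lia. }
  apply Rabs_def2 in H1. apply Rabs_def2 in H2. apply Rabs_def1; lra.
Qed.

Lemma vol_squeeze m A v (Lo Up : nat -> list (list Z)) N1 :
  (forall N, (N1 <= N)%nat -> NoDup (Lo N) /\ forall k, In k (Lo N) -> length k = m /\ forall y, gcube m N k y -> A y) ->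
  (forall N, (N1 <= N)%nat -> forall k, length k = m -> (exists y, gcube m N k y /\ A y) -> In k (Up N)) ->
  Un_cv (fun N => INR (length (Lo N)) / INR N ^ m) v ->
  Un_cv (fun N => INR (length (Up N)) / INR N ^ m) v ->
  is_volume m A v.
Proof.
  intros HL HU CL CU eps He. destruct (CL eps He) as [N2 H2]. destruct (CU eps He) as [N3 H3].
  exists (Nat.max N1 (Nat.max N2 N3)). intros N HN HN1.
  assert (Hio : forall k, length k = m -> (forall y, gcube m N k y -> A y) -> exists y, gcube m N k y /\ A y).
  { intros k _ Hk. eexists; split; [|apply Hk]; apply gcube_nonempty; auto. }
  destruct (count_exists m (fun k => forall y, gcube m N k y -> A y) (Up N)) as [ci [Hci Hci']].
  { intros k Hk Hk'. apply HU; auto. lia. }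
  destruct (count_exists m (fun k => exists y, gcube m N k y /\ A y) (Up N)) as [co [Hco Hco']].
  { intros k Hk Hk'. apply HU; auto. lia. }
  destruct (HL N ltac:(lia)) as [HnD HLi].
  assert (length (Lo N) <= ci)%nat.
  { apply (count_lower m (fun k => forall y, gcube m N k y -> A y) ci (Lo N)); auto. }
  assert (length (Lo N) <= co)%nat.
  { apply (count_lower m (fun k => exists y, gcube m N k y /\ A y) co (Lo N)); auto. intros k Hk. destruct (HLi k Hk). split; auto. }
  exists ci, co. split; auto. split; auto.
  specialize (H2 N ltac:(lia)). specialize (H3 N ltac:(lia)). unfold Rdist in *.
  split; eapply squeeze_ratio; eauto; lia.
Qed.

Lemma vol_unique m A v w : is_volume m A v -> is_volume m A w -> v = w.
Proof.
  intros Hv Hw. destruct (Req_dec v w) as [|Hne]; auto. exfalso.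
  set (eps := Rabs (v - w) / 2).
  assert (0 < eps). { unfold eps. assert (0 < Rabs (v - w)) by (apply Rabs_pos_lt; lra). lra. }
  destruct (Hv eps H) as [N1 H1]. destruct (Hw eps H) as [N2 H2].
  set (N := S (Nat.max N1 N2)).
  destruct (H1 N ltac:(unfold N; lia) ltac:(unfold N; lia)) as [ci [co [Hci [_ [E1 _]]]]].
  destruct (H2 N ltac:(unfold N; lia) ltac:(unfold N; lia)) as [ci' [co' [Hci' [_ [E2 _]]]]].
  rewrite <- (count_unique _ _ _ _ Hci Hci') in E2.
  assert (Rabs (v - w) <= Rabs (INR ci / INR N ^ m - w) + Rabs (INR ci / INR N ^ m - v)).
  { replace (v - w) with ((INR ci / INR N ^ m - w) - (INR ci / INR N ^ m - v)) by ring.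
    eapply Rle_trans. apply Rabs_triang. rewrite Rabs_Ropp. lra. }
  unfold eps in *. lra.
Qed.

Open Scope R_scope.

Fixpoint prodl (f : Z -> list Z) (p : list Z) : list (list Z) :=
  match p with [] => [[]] | x :: p' => flat_map (fun z => map (cons z) (prodl f p')) (f x) end.

Lemma list_sum_const {A} (l : list A) c : list_sum (map (fun _ => c) l) = (length l * c)%nat.
Proof. induction l; simpl; auto. Qed.

Lemma prodl_len f p K : (forall x, length (f x) = K) -> length (prodl f p) = (K ^ length p)%nat.
Proof. intros H. induction p; simpl; auto. rewrite length_flat_map_cons.
  rewrite (map_ext _ (fun _ => K ^ length p)%nat) by auto. rewrite list_sum_const, H. auto. Qed.

Lemma prodl_NoDup f p : (forall x, NoDup (f x)) -> NoDup (prodl f p).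
Proof. intros H. induction p; simpl. constructor; auto; constructor. apply NoDup_flat_map_cons; auto. Qed.

Lemma prodl_In f p q : In q (prodl f p) <-> length q = length p /\ forall i, (i < length p)%nat -> In (nth i q 0%Z) (f (nth i p 0%Z)).
Proof. revert q; induction p as [|x p IH]; intros q; simpl.
  - split. intros [<-|[]]. simpl; split; auto; intros; lia. intros [H _]. destruct q; simpl in *; auto; lia.
  - rewrite in_flat_map. split.
    + intros [z [Hz Hq]]. rewrite in_map_iff in Hq. destruct Hq as [q' [<- Hq']]. apply IH in Hq'.
      destruct Hq' as [E Hi]. simpl. split; auto. intros [|i] Hi'; simpl; auto. apply Hi; lia.
    + intros [E Hi]. destruct q as [|z q']; simpl in E; [lia|]. exists z. split.
      apply (Hi 0%nat); lia. apply in_map. apply IH. split. lia. intros i Hi'. apply (Hi (S i)); lia.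
Qed.

Lemma length_flat_map_const {A B} (g : A -> list B) l K : (forall p, In p l -> length (g p) = K) -> length (flat_map g l) = (length l * K)%nat.
Proof. induction l; simpl; intros H; auto. rewrite length_app, H, IHl; auto. Qed.

Lemma NoDup_flat_map_disj {A B} (g : A -> list B) l : NoDup l -> (forall p, In p l -> NoDup (g p)) ->
  (forall p p', In p l -> In p' l -> p <> p' -> forall q, In q (g p) -> ~ In q (g p')) -> NoDup (flat_map g l).
Proof. intros Hl; induction Hl as [|x l Hx Hl IH]; intros H1 H2; simpl. constructor.
  apply NoDup_app. apply H1; simpl; auto. apply IH. intros; apply H1; simpl; auto.
  intros; apply (H2 p p'); simpl; auto. intros q Hq Hq'. rewrite in_flat_map in Hq'. destruct Hq' as [p' [Hp' Hq']].
  apply (H2 x p' ltac:(simpl; auto) ltac:(simpl; auto)) with q; auto. intro; subst; auto. Qed.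

Lemma list_neq_nth (p p' : list Z) : length p = length p' -> p <> p' -> exists i, (i < length p)%nat /\ nth i p 0%Z <> nth i p' 0%Z.
Proof. revert p'; induction p as [|x p IH]; intros [|x' p'] E H; simpl in *; try lia. congruence.
  destruct (Z.eq_dec x x'). subst. destruct (IH p') as [i [Hi Hn]]. lia. congruence. exists (S i). split; auto; lia.
  exists 0%nat. split; auto; lia. Qed.

Definition hN (N : nat) : Z := (Z.of_nat N / 2)%Z.
Lemma hN_bound N : (2 * hN N <= Z.of_nat N <= 2 * hN N + 1)%Z.
Proof. unfold hN. pose proof (Z.div_mod (Z.of_nat N) 2). pose proof (Z.mod_pos_bound (Z.of_nat N) 2). lia. Qed.

Definition fL (N : nat) (x : Z) : list Z := map (fun t => Z.of_nat N * x - hN N + Z.of_nat t)%Z (seq 0 (N - 1)).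
Definition fU (N : nat) (x : Z) : list Z := map (fun t => Z.of_nat N * x - hN N - 1 + Z.of_nat t)%Z (seq 0 (N + 2)).

Lemma in_fL N x z : In z (fL N x) <-> exists t, (t < N - 1)%nat /\ z = (Z.of_nat N * x - hN N + Z.of_nat t)%Z.
Proof. unfold fL. rewrite in_map_iff. split. intros [t [<- Ht]]. apply in_seq in Ht. exists t; split; auto; lia.
  intros [t [Ht ->]]. exists t. split; auto. apply in_seq; lia. Qed.

Lemma in_fU N x z : (Z.of_nat N * x - hN N - 1 <= z <= Z.of_nat N * x - hN N + Z.of_nat N)%Z -> In z (fU N x).
Proof. intros H. unfold fU. apply in_map_iff. exists (Z.to_nat (z - (Z.of_nat N * x - hN N - 1))). split. lia. apply in_seq. lia. Qed.

Lemma INR_pos N : (1 <= N)%nat -> 0 < INR N. Proof. intros; apply lt_0_INR; lia. Qed.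

Lemma interval_in (k p : Z) N y : (1 <= N)%nat -> (2 * k >= 2 * Z.of_nat N * p - Z.of_nat N)%Z ->
  (2 * k + 2 <= 2 * Z.of_nat N * p + Z.of_nat N)%Z ->
  IZR k / INR N <= y <= (IZR k + 1) / INR N -> IZR p - 1/2 <= y <= IZR p + 1/2.
Proof. intros HN H1 H2 [Hy1 Hy2]. pose proof (INR_pos N HN) as Hn. rewrite INR_IZR_INZ in *.
  apply Z.ge_le in H1. apply IZR_le in H1. apply IZR_le in H2.
  repeat rewrite ?plus_IZR, ?mult_IZR, ?minus_IZR in H1. repeat rewrite ?plus_IZR, ?mult_IZR, ?minus_IZR in H2.
  set (n := IZR (Z.of_nat N)) in *.
  set (u := IZR k / n) in *. assert (IZR k = u * n) by (unfold u; field; lra).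
  replace ((IZR k + 1) / n) with (u + / n) in Hy2 by (unfold u; field; lra).
  assert (n * / n = 1) by (field; lra). assert (0 < / n) by (apply Rinv_0_lt_compat; auto).
  split; nra.
Qed.

Lemma interval_out (k p : Z) N y : (1 <= N)%nat ->
  IZR k / INR N <= y <= (IZR k + 1) / INR N -> IZR p - 1/2 <= y <= IZR p + 1/2 ->
  (2 * k <= 2 * Z.of_nat N * p + Z.of_nat N)%Z /\ (2 * k + 2 >= 2 * Z.of_nat N * p - Z.of_nat N)%Z.
Proof. intros HN [Hy1 Hy2] [Hp1 Hp2]. pose proof (INR_pos N HN) as Hn. rewrite INR_IZR_INZ in *.
  set (n := IZR (Z.of_nat N)) in *.
  set (u := IZR k / n) in *. assert (IZR k = u * n) by (unfold u; field; lra).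
  replace ((IZR k + 1) / n) with (u + / n) in Hy2 by (unfold u; field; lra).
  assert (n * / n = 1) by (field; lra). assert (0 < / n) by (apply Rinv_0_lt_compat; auto).
  split. - apply le_IZR. repeat rewrite ?plus_IZR, ?mult_IZR. fold n. nra.
  - apply Z.le_ge. apply le_IZR. repeat rewrite ?plus_IZR, ?mult_IZR, ?minus_IZR. fold n. nra.
Qed.

Open Scope R_scope.

Lemma CV_ratio c : Un_cv (fun N => INR (N + c) / INR N) 1.
Proof. apply Un_cv_K with (K := INR c) (N1 := 1%nat). intros N _ HN. pose proof (INR_pos N HN).
  rewrite plus_INR. replace ((INR N + INR c) / INR N - 1) with (INR c / INR N) by (field; lra).
  rewrite Rabs_right. lra. apply Rle_ge. unfold Rdiv. apply Rmult_le_pos. apply pos_INR. left; apply Rinv_0_lt_compat; auto. Qed.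

Lemma CV_ratio_m : Un_cv (fun N => INR (N - 1) / INR N) 1.
Proof. apply Un_cv_K with (K := 1) (N1 := 1%nat). intros N _ HN. pose proof (INR_pos N HN).
  rewrite minus_INR by lia. simpl. replace ((INR N - 1) / INR N - 1) with (- (1 / INR N)) by (field; lra).
  rewrite Rabs_Ropp, Rabs_right. lra. apply Rle_ge. unfold Rdiv. apply Rmult_le_pos. lra. left; apply Rinv_0_lt_compat; auto. Qed.

Lemma CV_scaled (S0 : nat) (f : nat -> nat) m :
  Un_cv (fun N => INR (f N) / INR N) 1 ->
  Un_cv (fun N => INR (S0 * f N ^ m) / INR N ^ m) (INR S0).
Proof. intros H. apply Un_cv_ev with (N1 := 1%nat) (x := fun N => INR S0 * (INR (f N) / INR N) ^ m).
  { intros N HN. pose proof (INR_pos N HN). rewrite mult_INR, pow_INR. unfold Rdiv. rewrite Rpow_mult_distr.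
    rewrite pow_inv. ring. }
  pose proof (CV_mult _ _ _ _ (Un_cv_const (INR S0)) (CV_pow _ _ m H)) as H'.
  rewrite pow1, Rmult_1_r in H'. exact H'. Qed.

Lemma fL_NoDup N x : NoDup (fL N x).
Proof. apply NoDup_map_inj. intros; lia. apply seq_NoDup. Qed.

Theorem cube_vol m r : is_volume m (cubeset m (Sm m r r)) (INR (G m r r)).
Proof.
  apply vol_squeeze with (N1 := 1%nat)
    (Lo := fun N => flat_map (prodl (fL N)) (Sl m r r)) (Up := fun N => flat_map (prodl (fU N)) (Sl m r r)).
  - intros N HN. split.
    + apply NoDup_flat_map_disj. apply Sl_NoDup. intros; apply prodl_NoDup, fL_NoDup.
      intros p p' Hp Hp' Hne q Hq Hq'.
      apply Sl_In in Hp, Hp'. destruct Hp as [Lp _]. destruct Hp' as [Lp' _].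
      destruct (list_neq_nth p p') as [i [Hi Hn]]; auto. congruence.
      apply prodl_In in Hq, Hq'. destruct Hq as [_ Hq]. destruct Hq' as [_ Hq'].
      specialize (Hq i Hi). specialize (Hq' i ltac:(lia)).
      apply in_fL in Hq, Hq'. destruct Hq as [t [Ht E]]. destruct Hq' as [t' [Ht' E']].
      rewrite E in E'. apply Hn. nia.
    + intros k Hk. apply in_flat_map in Hk. destruct Hk as [p [Hp Hk]]. apply Sl_In in Hp.
      apply prodl_In in Hk. destruct Hk as [Lk Hk]. pose proof Hp as [Lp _].
      split. congruence. intros y Hy. exists p. split; auto. intros i Hi.
      specialize (Hk i ltac:(lia)). apply in_fL in Hk. destruct Hk as [t [Ht E]].
      pose proof (hN_bound N).
      apply (interval_in (nth i k 0%Z) (nth i p 0%Z) N); auto; try lia.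
  - intros N HN k Lk [y [Hy [p [Hp Hyp]]]]. apply in_flat_map. exists p. split. apply Sl_In; auto.
    pose proof Hp as [Lp _]. apply prodl_In. split. congruence. intros i Hi.
    destruct (interval_out (nth i k 0%Z) (nth i p 0%Z) N (y i)) as [B1 B2]; auto. apply Hy; lia. apply Hyp; lia.
    pose proof (hN_bound N). apply in_fU. lia.
  - apply Un_cv_ev with (N1 := 0%nat) (x := fun N => INR (G m r r * (N - 1) ^ m) / INR N ^ m).
    { intros N _. f_equal. f_equal. rewrite (length_flat_map_const _ _ ((N - 1) ^ m)%nat). rewrite Sl_length. auto.
      intros p Hp. apply Sl_In in Hp. destruct Hp as [Lp _]. rewrite <- Lp. apply prodl_len.
      intros; unfold fL. rewrite length_map, length_seq. auto. }
    apply CV_scaled. apply CV_ratio_m.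
  - apply Un_cv_ev with (N1 := 0%nat) (x := fun N => INR (G m r r * (N + 2) ^ m) / INR N ^ m).
    { intros N _. f_equal. f_equal. rewrite (length_flat_map_const _ _ ((N + 2) ^ m)%nat). rewrite Sl_length. auto.
      intros p Hp. apply Sl_In in Hp. destruct Hp as [Lp _]. rewrite <- Lp. apply prodl_len.
      intros; unfold fU. rewrite length_map, length_seq. auto. }
    apply CV_scaled. apply CV_ratio.
Qed.

Open Scope R_scope.

Definition posR m (y : nat -> R) := rsum m (fun i => Rmax (y i) 0).
Definition negR m (y : nat -> R) := rsum m (fun i => Rmax (- y i) 0).

Definition LS {A} (l : list A) (f : A -> R) : R := fold_right (fun x a => f x + a) 0 l.

Lemma LS_add {A} (l : list A) f g : LS l (fun x => f x + g x) = LS l f + LS l g.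
Proof. induction l; simpl; [ring|]. rewrite IHl. ring. Qed.
Lemma LS_mul_l {A} (l : list A) f c : LS l (fun x => c * f x) = c * LS l f.
Proof. induction l; simpl; [ring|]. rewrite IHl. ring. Qed.
Lemma LS_opp {A} (l : list A) f : - LS l f = LS l (fun x => - f x).
Proof. induction l; simpl; [unfold LS; simpl; ring|]. unfold LS in *; simpl. rewrite <- IHl. ring. Qed.
Lemma LS_ext {A} (l : list A) f g : (forall x, In x l -> f x = g x) -> LS l f = LS l g.
Proof. induction l; simpl; intros H; auto. rewrite H, IHl; auto. Qed.
Lemma LS_map {A B} (l : list A) (g : A -> B) f : LS (map g l) f = LS l (fun x => f (g x)).
Proof. induction l; simpl; auto. rewrite IHl; auto. Qed.
Lemma fold_c {A} (t : list A) f c : fold_right (fun x a => f x + a) c t = LS t f + c.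
Proof. induction t; simpl. ring. rewrite IHt. unfold LS; simpl; ring. Qed.

Lemma LS_flat_map {A B} (l : list A) (h : A -> list B) f : LS (flat_map h l) f = LS l (fun x => LS (h x) f).
Proof. induction l; simpl; auto. unfold LS at 1. rewrite fold_right_app. fold (LS (flat_map h l) f).
  rewrite IHl. apply fold_c. Qed.
Lemma LS_seq m f : LS (seq 0 m) f = rsum m f.
Proof. induction m; auto. rewrite seq_S. unfold LS. rewrite fold_right_app. simpl. fold (LS (seq 0 m) f).
  rewrite <- IHm. rewrite fold_c. simpl. ring. Qed.

Lemma LS_pick k n i (g : nat -> R) : LS (seq k n) (fun j => if Nat.eqb j i then g j else 0) = if (Nat.leb k i && Nat.ltb i (k + n))%bool then g i else 0.
Proof. revert k; induction n; intros k.
  - cbn [seq]. unfold LS; simpl. destruct (Nat.leb k i) eqn:E1, (Nat.ltb i (k + 0)) eqn:E2; simpl; auto; apply Nat.leb_le in E1; apply Nat.ltb_lt in E2; lia.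
  - cbn [seq]. change (LS (k :: seq (S k) n) ?f) with (f k + LS (seq (S k) n) f). rewrite IHn.
    destruct (Nat.eq_dec k i).
    + subst. rewrite Nat.eqb_refl. rewrite (proj2 (Nat.leb_gt (S i) i)) by lia.
      rewrite (proj2 (Nat.leb_le i i)) by lia. rewrite (proj2 (Nat.ltb_lt i (i + S n))) by lia. simpl. ring.
    + rewrite (proj2 (Nat.eqb_neq k i)) by auto. rewrite Rplus_0_l. destruct (lt_dec i k).
      * rewrite (proj2 (Nat.leb_gt (S k) i)) by lia. rewrite (proj2 (Nat.leb_gt k i)) by lia. reflexivity.
      * rewrite (proj2 (Nat.leb_le (S k) i)) by lia. rewrite (proj2 (Nat.leb_le k i)) by lia.
        replace (S k + n)%nat with (k + S n)%nat by lia. reflexivity.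
Qed.

Lemma rsum_succ_l n f : rsum (S n) f = f 0%nat + rsum n (fun i => f (S i)).
Proof. induction n; simpl in *. ring. rewrite IHn. ring. Qed.
Lemma rsum_add n f g : rsum n (fun i => f i + g i) = rsum n f + rsum n g.
Proof. induction n; simpl. ring. rewrite IHn. ring. Qed.
Lemma rsum_le n f g : (forall i, (i < n)%nat -> f i <= g i) -> rsum n f <= rsum n g.
Proof. induction n; simpl; intros H. lra. apply Rplus_le_compat. apply IHn; intros; apply H; lia. apply H; lia. Qed.
Lemma rsum_const n c : rsum n (fun _ => c) = INR n * c.
Proof. induction n; simpl. ring. rewrite IHn. destruct n; simpl; ring. Qed.

Lemma Rmax_IZR x : Rmax (IZR x) 0 = IZR (Z.max x 0).
Proof. destruct (Z_le_gt_dec x 0). rewrite Z.max_r by auto. apply Rmax_right. apply IZR_le; auto.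
  rewrite Z.max_l by lia. apply Rmax_left. apply IZR_le; lia. Qed.

Lemma posZ_rsum (z : list Z) : rsum (length z) (fun i => Rmax (IZR (nth i z 0%Z)) 0) = IZR (posZ z).
Proof. induction z; simpl length. reflexivity. rewrite rsum_succ_l. simpl nth. rewrite IHz. unfold posZ. simpl.
  rewrite plus_IZR, Rmax_IZR. auto. Qed.
Lemma negZ_rsum (z : list Z) : rsum (length z) (fun i => Rmax (- IZR (nth i z 0%Z)) 0) = IZR (negZ z).
Proof. induction z; simpl length. reflexivity. rewrite rsum_succ_l. simpl nth. rewrite IHz. unfold negZ. simpl.
  rewrite plus_IZR, <- Rmax_IZR, opp_IZR. auto. Qed.

Lemma max_comb (l : list (R * list Z)) (g : R * list Z -> R) :
  (forall c, In c l -> 0 <= fst c) ->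
  Rmax (LS l (fun c => fst c * g c)) 0 <= LS l (fun c => fst c * Rmax (g c) 0).
Proof. induction l; simpl; intros H. unfold Rmax; destruct (Rle_dec 0 0); lra.
  assert (0 <= fst a) by auto. specialize (IHl ltac:(auto)).
  assert (Rmax (fst a * g a) 0 = fst a * Rmax (g a) 0).
  { unfold Rmax. destruct (Rle_dec (fst a * g a) 0), (Rle_dec (g a) 0); nra. }
  unfold Rmax in *. destruct (Rle_dec (fst a * g a + LS l (fun c => fst c * g c)) 0),
     (Rle_dec (LS l (fun c => fst c * g c)) 0), (Rle_dec (fst a * g a) 0), (Rle_dec (g a) 0); nra.
Qed.

Lemma rsum_LS_exchange m (l : list (R * list Z)) (h : R * list Z -> nat -> R) :
  rsum m (fun i => LS l (fun c => fst c * h c i)) = LS l (fun c => fst c * rsum m (h c)).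
Proof. induction l; simpl. rewrite rsum_const. ring. rewrite rsum_add, IHl. rewrite rsum_mul_l. auto. Qed.

Lemma conv_sub m r y : convset m (Sm m r r) y -> posR m y <= INR r /\ negR m y <= INR r.
Proof.
  intros [l [Hc [Hs Hy]]].
  assert (Hs' : LS l fst = 1) by exact Hs.
  assert (Hy' : forall i, (i < m)%nat -> y i = LS l (fun c => fst c * IZR (nth i (snd c) 0%Z))) by exact Hy.
  assert (Hf : forall c, In c l -> 0 <= fst c) by (intros; apply Hc; auto).
  split.
  - unfold posR. rewrite (rsum_ext _ _ (fun i => Rmax (LS l (fun c => fst c * IZR (nth i (snd c) 0%Z))) 0))
      by (intros; rewrite Hy'; auto).
    eapply Rle_trans. apply rsum_le. intros i _. apply max_comb. auto.
cbv beta.     rewrite (rsum_LS_exchange m l (fun c i => Rmax (IZR (nth i (snd c) 0%Z)) 0)).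
    rewrite (LS_ext _ _ (fun c => fst c * IZR (posZ (snd c)))).
    2:{ intros c Hcl. destruct (Hc c Hcl) as [_ [Lc _]]. rewrite <- Lc, posZ_rsum. auto. }
    apply Rle_trans with (LS l (fun c => fst c * INR r)).
    { clear Hs Hs' Hy Hy'. induction l; simpl. lra. apply Rplus_le_compat.
      destruct (Hc a (or_introl eq_refl)) as [H0 [_ [H1 _]]]. apply Rmult_le_compat_l; auto.
      rewrite INR_IZR_INZ. apply IZR_le. exact H1. apply IHl; intros; apply Hc || apply Hf; simpl; auto. }
    rewrite (LS_ext l _ (fun c => INR r * fst c)) by (intros; ring). rewrite LS_mul_l, Hs'. lra.
  - unfold negR. rewrite (rsum_ext _ _ (fun i => Rmax (LS l (fun c => fst c * (- IZR (nth i (snd c) 0%Z)))) 0)).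
    2:{ intros i Hi. rewrite Hy' by auto. f_equal. rewrite LS_opp. apply LS_ext. intros; ring. }
    eapply Rle_trans. apply rsum_le. intros i _. apply max_comb. auto. cbv beta.
    rewrite (rsum_LS_exchange m l (fun c i => Rmax (- IZR (nth i (snd c) 0%Z)) 0)).
    rewrite (LS_ext _ _ (fun c => fst c * IZR (negZ (snd c)))).
    2:{ intros c Hcl. destruct (Hc c Hcl) as [_ [Lc _]]. rewrite <- Lc, negZ_rsum. auto. }
    apply Rle_trans with (LS l (fun c => fst c * INR r)).
    { clear Hs Hs' Hy Hy'. induction l; simpl. lra. apply Rplus_le_compat.
      destruct (Hc a (or_introl eq_refl)) as [H0 [_ [_ H1]]]. apply Rmult_le_compat_l; auto.
      rewrite INR_IZR_INZ. apply IZR_le. exact H1. apply IHl; intros; apply Hc || apply Hf; simpl; auto. }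
    rewrite (LS_ext l _ (fun c => INR r * fst c)) by (intros; ring). rewrite LS_mul_l, Hs'. lra.
Qed.

Open Scope R_scope.

Definition ind (r : nat) (s : option nat) (i : nat) : Z :=
  match s with Some j => if Nat.eqb j i then Z.of_nat r else 0%Z | None => 0%Z end.
Definition pt m r s t : list Z := map (fun i => ind r s i - ind r t i)%Z (seq 0 m).
Definition TT m : list (option nat) := None :: map Some (seq 0 m).

Definition Zsum (l : list nat) (g : nat -> Z) : Z := fold_right (fun i a => g i + a)%Z 0%Z l.

Lemma ind_nn r s i : (0 <= ind r s i)%Z.
Proof. destruct s; simpl; try lia. destruct (Nat.eqb n i); lia. Qed.

Lemma Zsum_zero k n j r : (j < k)%nat -> Zsum (seq k n) (ind r (Some j)) = 0%Z.
Proof. revert k; induction n; intros k H; simpl; auto. rewrite IHn by lia.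
  rewrite (proj2 (Nat.eqb_neq j k)) by lia. lia. Qed.

Lemma Zsum_le k n r s : (Zsum (seq k n) (ind r s) <= Z.of_nat r)%Z.
Proof. destruct s as [j|].
  - revert k; induction n; intros k; simpl. lia. destruct (Nat.eq_dec j k).
    + subst. rewrite Nat.eqb_refl. rewrite Zsum_zero by lia. lia.
    + rewrite (proj2 (Nat.eqb_neq j k)) by auto. specialize (IHn (S k)). simpl; lia.
  - induction (seq k n); simpl; lia.
Qed.

Lemma pos_pt_le l r s t : (posZ (map (fun i => ind r s i - ind r t i)%Z l) <= Zsum l (ind r s))%Z.
Proof. induction l; simpl. unfold posZ; simpl; lia. unfold posZ in *; simpl. pose proof (ind_nn r s a). pose proof (ind_nn r t a). lia. Qed.
Lemma neg_pt_le l r s t : (negZ (map (fun i => ind r s i - ind r t i)%Z l) <= Zsum l (ind r t))%Z.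
Proof. induction l; simpl. unfold negZ; simpl; lia. unfold negZ in *; simpl. pose proof (ind_nn r s a). pose proof (ind_nn r t a). lia. Qed.

Lemma pt_Sm m r s t : Sm m r r (pt m r s t).
Proof. unfold Sm, pt. split. rewrite length_map, length_seq; auto. split.
  - pose proof (pos_pt_le (seq 0 m) r s t). pose proof (Zsum_le 0 m r s). unfold posZ in *. lia.
  - pose proof (neg_pt_le (seq 0 m) r s t). pose proof (Zsum_le 0 m r t). unfold negZ in *. lia.
Qed.

Lemma nth_map_seq m (f : nat -> Z) i d : (i < m)%nat -> nth i (map f (seq 0 m)) d = f i.
Proof. intros H. rewrite nth_indep with (d' := f 0%nat) by (rewrite length_map, length_seq; auto).
  rewrite map_nth, seq_nth by auto. auto. Qed.

Section Conv.
Variables (m r : nat) (y : nat -> R).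
Hypothesis Hr : (1 <= r)%nat.
Hypothesis Hp : posR m y <= INR r.
Hypothesis Hn : negR m y <= INR r.

Definition lam (s : option nat) : R := match s with None => 1 - posR m y / INR r | Some j => Rmax (y j) 0 / INR r end.
Definition mu (s : option nat) : R := match s with None => 1 - negR m y / INR r | Some j => Rmax (- y j) 0 / INR r end.

Definition cl := flat_map (fun s => map (fun t => (lam s * mu t, pt m r s t)) (TT m)) (TT m).

Lemma rpos : 0 < INR r. Proof. apply lt_0_INR; lia. Qed.

Lemma lam_nn s : 0 <= lam s.
Proof. pose proof rpos. destruct s; simpl. unfold Rdiv; apply Rmult_le_pos. apply Rmax_r. left; apply Rinv_0_lt_compat; auto.
  assert (posR m y / INR r <= 1). { apply Rmult_le_reg_r with (INR r); auto. unfold Rdiv; rewrite Rmult_assoc, Rinv_l; lra. } lra. Qed.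
Lemma mu_nn s : 0 <= mu s.
Proof. pose proof rpos. destruct s; simpl. unfold Rdiv; apply Rmult_le_pos. apply Rmax_r. left; apply Rinv_0_lt_compat; auto.
  assert (negR m y / INR r <= 1). { apply Rmult_le_reg_r with (INR r); auto. unfold Rdiv; rewrite Rmult_assoc, Rinv_l; lra. } lra. Qed.

Lemma LS_TT f : LS (TT m) f = f None + rsum m (fun j => f (Some j)).
Proof. unfold TT. change (LS (None :: map Some (seq 0 m)) f) with (f None + LS (map Some (seq 0 m)) f).
  rewrite LS_map, LS_seq. auto. Qed.

Lemma lam_sum : LS (TT m) lam = 1.
Proof. pose proof rpos. rewrite LS_TT. simpl. rewrite <- rsum_div. unfold posR. field. lra. Qed.
Lemma mu_sum : LS (TT m) mu = 1.
Proof. pose proof rpos. rewrite LS_TT. simpl. rewrite <- rsum_div. unfold negR. field. lra. Qed.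

Lemma lam_ind i : (i < m)%nat -> LS (TT m) (fun s => lam s * IZR (ind r s i)) = Rmax (y i) 0.
Proof. intros Hi. pose proof rpos. rewrite LS_TT. simpl. rewrite Rmult_0_r, Rplus_0_l.
  rewrite <- LS_seq. rewrite (LS_ext _ _ (fun j => if Nat.eqb j i then Rmax (y j) 0 / INR r * INR r else 0)).
  2:{ intros j _. destruct (Nat.eqb j i); [rewrite <- INR_IZR_INZ|]; ring. }
  rewrite LS_pick. rewrite (proj2 (Nat.leb_le 0 i)) by lia. rewrite (proj2 (Nat.ltb_lt i (0 + m))) by lia. simpl. field. lra. Qed.
Lemma mu_ind i : (i < m)%nat -> LS (TT m) (fun s => mu s * IZR (ind r s i)) = Rmax (- y i) 0.
Proof. intros Hi. pose proof rpos. rewrite LS_TT. simpl. rewrite Rmult_0_r, Rplus_0_l.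
  rewrite <- LS_seq. rewrite (LS_ext _ _ (fun j => if Nat.eqb j i then Rmax (- y j) 0 / INR r * INR r else 0)).
  2:{ intros j _. destruct (Nat.eqb j i); [rewrite <- INR_IZR_INZ|]; ring. }
  rewrite LS_pick. rewrite (proj2 (Nat.leb_le 0 i)) by lia. rewrite (proj2 (Nat.ltb_lt i (0 + m))) by lia. simpl. field. lra. Qed.

Lemma conv_sup : convset m (Sm m r r) y.
Proof.
  exists cl. split; [|split].
  - intros c Hc. unfold cl in Hc. apply in_flat_map in Hc. destruct Hc as [s [_ Hc]]. apply in_map_iff in Hc.
    destruct Hc as [t [<- _]]. simpl. split. apply Rmult_le_pos; [apply lam_nn|apply mu_nn]. apply pt_Sm.
  - change (LS cl fst = 1). unfold cl. rewrite LS_flat_map.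
    rewrite (LS_ext _ _ (fun s => lam s * LS (TT m) mu)).
    2:{ intros s _. rewrite LS_map. cbn [fst snd]. rewrite <- LS_mul_l. auto. }
    rewrite (LS_ext _ _ (fun s => LS (TT m) mu * lam s)) by (intros; ring). rewrite LS_mul_l, lam_sum, mu_sum. ring.
  - intros i Hi. change (y i = LS cl (fun c => fst c * IZR (nth i (snd c) 0%Z))). unfold cl. rewrite LS_flat_map.
    rewrite (LS_ext _ _ (fun s => (lam s * IZR (ind r s i)) * LS (TT m) mu + (- lam s) * LS (TT m) (fun t => mu t * IZR (ind r t i)))).
    2:{ intros s _. rewrite LS_map. cbn [fst snd]. rewrite <- !LS_mul_l, <- LS_add. apply LS_ext. intros t _.
        unfold pt. rewrite nth_map_seq by auto. rewrite minus_IZR. ring. }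
    rewrite LS_add. rewrite mu_sum.
    rewrite (LS_ext (TT m) (fun x => lam x * IZR (ind r x i) * 1) (fun s => lam s * IZR (ind r s i))) by (intros; ring).
    rewrite (LS_ext (TT m) (fun x => - lam x * LS (TT m) (fun t => mu t * IZR (ind r t i))) (fun s => (- LS (TT m) (fun t => mu t * IZR (ind r t i))) * lam s)) by (intros; ring).
    rewrite LS_mul_l, lam_sum, lam_ind, mu_ind by auto. unfold Rmax. destruct (Rle_dec (y i) 0), (Rle_dec (- y i) 0); lra.
Qed.
End Conv.

Open Scope R_scope.

Lemma gcube_coord m N k y i : (1 <= N)%nat -> gcube m N k y -> (i < m)%nat ->
  IZR (nth i k 0%Z) <= INR N * y i <= IZR (nth i k 0%Z) + 1.
Proof. intros HN H Hi. pose proof (INR_pos N HN). destruct (H i Hi) as [H1 H2].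
  set (a := IZR (nth i k 0%Z)) in *. 
  assert (a = a / INR N * INR N) by (field; lra). assert (a + 1 = (a + 1) / INR N * INR N) by (field; lra).
  split; nra. Qed.

Lemma gcube_bounds m N k y : (1 <= N)%nat -> length k = m -> gcube m N k y ->
  INR N * posR m y <= IZR (posZ k) + INR m /\ IZR (negZ k) <= INR N * negR m y + INR m /\
  IZR (posZ k) <= INR N * posR m y /\ INR N * negR m y <= IZR (negZ k).
Proof. intros HN Lk H. pose proof (INR_pos N HN).
  rewrite <- posZ_rsum, <- negZ_rsum, Lk. unfold posR, negR. rewrite !rsum_mul_l.
  assert (E : forall i, (i < m)%nat -> IZR (nth i k 0%Z) <= INR N * y i <= IZR (nth i k 0%Z) + 1)
    by (intros; apply (gcube_coord m); auto).
  assert (M1 : forall z, INR N * Rmax z 0 = Rmax (INR N * z) 0).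
  { intros z. unfold Rmax. destruct (Rle_dec z 0), (Rle_dec (INR N * z) 0); nra. }
  assert (M2 : forall z, INR N * Rmax (- z) 0 = Rmax (- (INR N * z)) 0).
  { intros z. unfold Rmax. destruct (Rle_dec (-z) 0), (Rle_dec (- (INR N * z)) 0); nra. }
  rewrite <- (Rmult_1_r (INR m)), <- rsum_const.
  split; [|split; [|split]].
  - rewrite <- rsum_add. apply rsum_le. intros i Hi. rewrite M1. specialize (E i Hi).
    unfold Rmax. destruct (Rle_dec (INR N * y i) 0), (Rle_dec (IZR (nth i k 0%Z)) 0); lra.
  - rewrite <- rsum_add. apply rsum_le. intros i Hi. rewrite M2. specialize (E i Hi).
    unfold Rmax. destruct (Rle_dec (- (INR N * y i)) 0), (Rle_dec (- IZR (nth i k 0%Z)) 0); lra.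
  - apply rsum_le. intros i Hi. rewrite M1. specialize (E i Hi).
    unfold Rmax. destruct (Rle_dec (INR N * y i) 0), (Rle_dec (IZR (nth i k 0%Z)) 0); lra.
  - apply rsum_le. intros i Hi. rewrite M2. specialize (E i Hi).
    unfold Rmax. destruct (Rle_dec (- (INR N * y i)) 0), (Rle_dec (- IZR (nth i k 0%Z)) 0); lra.
Qed.

Lemma outer_conv m r N k : (1 <= N)%nat -> length k = m ->
  (exists y, gcube m N k y /\ convset m (Sm m r r) y) -> In k (Sl m (r * N) (r * N + m)).
Proof. intros HN Lk [y [Hy Hc]]. apply conv_sub in Hc. destruct Hc as [H1 H2].
  destruct (gcube_bounds m N k y HN Lk Hy) as [_ [B2 [B3 _]]]. pose proof (INR_pos N HN).
  apply Sl_In. split; auto. split.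
  - apply le_IZR. rewrite <- INR_IZR_INZ, mult_INR. fold (posZ k). nra.
  - apply le_IZR. rewrite <- INR_IZR_INZ, plus_INR, mult_INR. fold (negZ k). nra.
Qed.

Theorem conv_vol m r : (1 <= m)%nat -> is_volume m (convset m (Sm m r r)) (INR r ^ m / INR (fact m) * C (2 * m) m).
Proof.
  intros Hm.
  assert (CU : Un_cv (fun N => INR (length (Sl m (r * N) (r * N + m))) / INR N ^ m) (INR r ^ m / INR (fact m) * C (2 * m) m)).
  { apply Un_cv_ev with (N1 := 0%nat) (x := fun N => INR (G m (r * N) (r * N + m)) / INR N ^ m).
    intros; rewrite Sl_length; auto.
    apply (CV_G m (fun N => r * N)%nat (fun N => r * N + m)%nat (INR r) (INR m)).
    - intros N. rewrite mult_INR. rewrite Rminus_diag, Rabs_R0. apply pos_INR.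
    - intros N. rewrite plus_INR, mult_INR. replace (INR r * INR N + INR m - INR r * INR N) with (INR m) by ring.
      rewrite Rabs_right. lra. apply Rle_ge, pos_INR. }
  destruct r as [|r'].
  - apply vol_squeeze with (N1 := 1%nat) (Lo := fun _ => []) (Up := fun N => Sl m (0 * N) (0 * N + m)).
    + intros; split. constructor. intros k [].
    + intros N HN k Lk H. apply outer_conv; auto.
    + replace (INR 0 ^ m / INR (fact m) * C (2 * m) m) with 0.
      2:{ simpl. rewrite pow_i by lia. unfold Rdiv. ring. }
      apply Un_cv_ev with (N1 := 0%nat) (x := fun _ => 0). intros; simpl; unfold Rdiv; ring. apply Un_cv_const.
    + exact CU.
  - set (r := S r') in *.
    apply vol_squeeze with (N1 := m) (Lo := fun N => Sl m (r * N - m) (r * N)) (Up := fun N => Sl m (r * N) (r * N + m)).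
    + intros N HN. split. apply Sl_NoDup. intros k Hk. apply Sl_In in Hk. destruct Hk as [Lk [P1 P2]].
      split; auto. intros y Hy. assert (HN1 : (1 <= N)%nat) by lia.
      destruct (gcube_bounds m N k y HN1 Lk Hy) as [B1 [_ [_ B4]]]. pose proof (INR_pos N HN1).
      assert (rN : (m <= r * N)%nat) by (unfold r; nia).
      apply IZR_le in P1. apply IZR_le in P2. rewrite <- INR_IZR_INZ in P1, P2. rewrite minus_INR in P1 by auto.
      rewrite mult_INR in P1, P2.
      apply conv_sup; [unfold r; lia| |]; apply Rmult_le_reg_l with (INR N); auto; fold (posZ k) (negZ k) in *; lra.
    + intros N HN k Lk H. apply outer_conv; auto. lia.
    + apply Un_cv_ev with (N1 := 0%nat) (x := fun N => INR (G m (r * N - m) (r * N)) / INR N ^ m).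
      intros; rewrite Sl_length; auto.
      apply (CV_G m (fun N => r * N - m)%nat (fun N => r * N)%nat (INR r) (INR m)).
      * intros N. destruct (le_lt_dec m (r * N)).
        -- rewrite minus_INR, mult_INR by auto. replace (INR r * INR N - INR m - INR r * INR N) with (- INR m) by ring.
           rewrite Rabs_Ropp, Rabs_right. lra. apply Rle_ge, pos_INR.
        -- replace (r * N - m)%nat with 0%nat by lia. apply lt_INR in l. rewrite mult_INR in l.
           pose proof (pos_INR r); pose proof (pos_INR N). change (INR 0) with 0. apply Rabs_le. nra.
      * intros N. rewrite mult_INR. rewrite Rminus_diag, Rabs_R0. apply pos_INR.
    + exact CU.
Qed.

Open Scope R_scope.

Lemma sum_f_rsum f n : sum_f_R0 f n = rsum (S n) f.
Proof. induction n; simpl. ring. rewrite IHn. simpl. ring. Qed.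

Lemma v_eq m r : sum_f_R0 (fun j => C m j * C r j * C (r + m - j) (m - j)) (Nat.min m r) = INR (G m r r).
Proof.
  unfold G. rewrite (ssum_zero_tail (S (Nat.min m r))).
  - rewrite INR_ssum, sum_f_rsum. apply rsum_ext. intros j Hj. rewrite !mult_INR, !bin_C by lia. auto.
  - lia.
  - intros i Hi. destruct (le_lt_dec i m). rewrite (bin_gt r i) by lia. lia. rewrite (bin_gt m i) by lia. lia.
Qed.

Lemma bin_pos n k : (k <= n)%nat -> (1 <= bin n k)%nat.
Proof. revert k; induction n; intros [|k] H; simpl; try lia. specialize (IHn k ltac:(lia)). lia. Qed.

Lemma G_pos m a b : (1 <= G m a b)%nat.
Proof. unfold G. rewrite ssum_succ_l. rewrite !bin_0. replace (b + m - 0)%nat with (b + m)%nat by lia.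
  replace (m - 0)%nat with m by lia. pose proof (bin_pos (b + m) m ltac:(lia)). lia. Qed.

Theorem mainTheorem10 (m : nat) (hm : (1 <= m)%nat) :
  (forall r : nat,
     is_volume m (cubeset m (Sm m r r))
       (sum_f_R0 (fun j => C m j * C r j * C (r + m - j) (m - j)) (Nat.min m r))) /\
  (forall r : nat,
     is_volume m (convset m (Sm m r r))
       (INR r ^ m / INR (fact m) * C (2 * m) m)) /\
  (forall vcube vconv : nat -> R,
     (forall r, is_volume m (cubeset m (Sm m r r)) (vcube r)) ->
     (forall r, is_volume m (convset m (Sm m r r)) (vconv r)) ->
     Un_cv (fun r => vconv r / vcube r) 1).
Proof.
  split; [|split].
  - intros r. rewrite v_eq. apply cube_vol.
  - intros r. apply conv_vol; auto.
  - intros vcube vconv Hc Hv.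
    set (K := 1 ^ m / INR (fact m) * C (2 * m) m).
    assert (HK : 0 < K).
    { unfold K. rewrite pow1. rewrite <- bin_C by lia. pose proof (bin_pos (2 * m) m ltac:(lia)).
      apply le_INR in H. change (INR 1) with 1 in H. pose proof (INR_fact_lt_0 m).
      apply Rmult_lt_0_compat; [|lra]. unfold Rdiv. apply Rmult_lt_0_compat; [lra|]. apply Rinv_0_lt_compat; auto. }
    assert (CG : Un_cv (fun N => INR (G m N N) / INR N ^ m) K).
    { apply (CV_G m (fun N => N) (fun N => N) 1 0); intros N; rewrite Rmult_1_l, Rminus_diag, Rabs_R0; lra. }
    pose proof (continuity_seq (fun x => K / x) (fun N => INR (G m N N) / INR N ^ m) K) as CS.
    assert (Hcont : continuity_pt (fun x => K / x) K).
    { apply (continuity_pt_div (fun _ => K) (fun x => x)). apply continuity_pt_const. intros a b; auto.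
      apply derivable_continuous_pt, derivable_pt_id. lra. }
    specialize (CS Hcont CG). cbv beta in CS. replace (K / K) with 1 in CS by (field; lra).
    apply Un_cv_ev with (N1 := 1%nat) (x := fun N => K / (INR (G m N N) / INR N ^ m)); [|exact CS].
    intros N HN. rewrite (vol_unique _ _ _ _ (Hc N) (cube_vol m N)).
    rewrite (vol_unique _ _ _ _ (Hv N) (conv_vol m N hm)).
    pose proof (G_pos m N N) as GP. apply le_INR in GP. change (INR 1) with 1 in GP.
    pose proof (INR_pos N HN). assert (0 < INR N ^ m) by (apply pow_lt; auto).
    unfold K. rewrite pow1. field. split; [apply INR_fact_neq_0|split; lra].
Qed.
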